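(* Let $V,W$ be complex vector spaces, let $M=(M_1,\dots,M_s)\in\mathrm{Hom}(V,W)^s$, and suppose $\mathrm{rk}(M)\geq s$. Then there is $v\in V$ such that the span $\langle M_1v,\dots,M_sv\rangle\subseteq W$ has dimension $s$.
   Context: Rank of a tuple: for vector spaces $V,W$ and $M=(M_1,\dots,M_s)\in\mathrm{Hom}(V,W)^s$, $\mathrm{rk}(M)$ is the infimum of $\mathrm{rk}(\sum_i\lambda_iM_i)\in\mathbb{Z}_{\ge0}\cup\{\infty\}$ over all nonzero $(\lambda_1,\dots,\lambda_s)\in\mathbb{C}^s$ (so $\mathrm{rk}(M)=\infty$ if $s=0$). *)

(* Defs.v *)
From HB Require Import structures.
From mathcomp Require Import all_boot all_order all_algebra.
Set Implicit Arguments. Unset Strict Implicit. Unset Printing Implicit Defensive.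
Import Order.TTheory GRing.Theory Num.Theory.
Local Open Scope ring_scope.

Definition lin_indep (F : fieldType) (W : lmodType F) (k : nat)
  (u : 'I_k -> W) : Prop :=
  forall c : 'I_k -> F, \sum_(i < k) c i *: u i = 0 -> forall i, c i = 0.

Definition dim_ge (F : fieldType) (W : lmodType F) (P : W -> Prop) (k : nat)
  : Prop :=
  exists u : 'I_k -> W, (forall i, P (u i)) /\ lin_indep u.

Definition dim_eq (F : fieldType) (W : lmodType F) (P : W -> Prop) (k : nat)
  : Prop := dim_ge P k /\ ~ dim_ge P k.+1.

Definition image_of (F : fieldType) (V W : lmodType F) (f : V -> W) : W -> Prop :=
  fun w => exists v, w = f v.

Definition span_of (F : fieldType) (W : lmodType F) (k : nat) (u : 'I_k -> W)
  : W -> Prop :=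
  fun w => exists c : 'I_k -> F, w = \sum_(i < k) c i *: u i.

(* rk(f) >= k for a linear map f (dim of image >= k; rank may be infinite). *)
Definition rank_ge (F : fieldType) (V W : lmodType F) (f : V -> W) (k : nat)
  : Prop := dim_ge (image_of f) k.

(* rk(M) >= k for a tuple M = (M_1,...,M_s): every nonzero linear combination
   sum_i lambda_i M_i has rank >= k (for s = 0 this holds vacuously, rk = oo). *)
Definition tuple_rank_ge (F : fieldType) (V W : lmodType F) (s : nat)
  (M : 'I_s -> {linear V -> W}) (k : nat) : Prop :=
  forall lam : 'I_s -> F, (exists i, lam i != 0) ->
    rank_ge (fun v => \sum_(i < s) lam i *: M i v) k.

(* Main.v *)
Require Import Defs.
From HB Require Import structures.
From mathcomp Require Import all_boot all_order all_algebra.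
From Stdlib Require Import Classical.
Set Implicit Arguments. Unset Strict Implicit. Unset Printing Implicit Defensive.
Import Order.TTheory GRing.Theory Num.Theory.
Local Open Scope ring_scope.

Lemma sum_coord (F : fieldType) (W : lmodType F) n k (X : 'M[F]_(n,k))
   (e : 'I_k -> W) (c : 'rV[F]_n) :
  \sum_(i < n) c 0 i *: (\sum_(j < k) X i j *: e j)
   = \sum_(j < k) (c *m X) 0 j *: e j.
Proof.
under eq_bigr do rewrite scaler_sumr.
rewrite exchange_big /=; apply: eq_bigr => j _.
rewrite mxE scaler_suml; apply: eq_bigr => i _; by rewrite scalerA.
Qed.

Lemma indep_rowfree (F : fieldType) (W : lmodType F) n k (X : 'M[F]_(n,k))
   (e : 'I_k -> W) (f : 'I_n -> W) :
  lin_indep e -> (forall i, f i = \sum_(j < k) X i j *: e j) ->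
  (lin_indep f <-> row_free X).
Proof.
move=> he hf; split.
- move=> hfi; rewrite -kermx_eq0; apply/eqP/row_matrixP => i.
  rewrite row0; apply/rowP => l; rewrite [RHS]mxE.
  apply: (hfi (fun l => row i (kermx X) 0 l) _ l).
  under eq_bigr do rewrite hf.
  rewrite (sum_coord X e (row i (kermx X))) -row_mul mulmx_ker row0.
  by apply: big1 => j _; rewrite mxE scale0r.
- move=> rf c hc i.
  have : (\row_l c l) *m X = 0 *m X.
    apply/rowP => j; rewrite mul0mx [RHS]mxE.
    apply: (he (fun j => ((\row_l c l) *m X) 0 j) _ j).
    rewrite -(sum_coord X e) -[RHS]hc; apply: eq_bigr => l _; by rewrite hf mxE.
  move/(row_free_inj rf)/rowP/(_ i); by rewrite !mxE.
Qed.

Lemma steinitz (F : fieldType) (W : lmodType F) n m (x : 'I_n -> W)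
  (y : 'I_m -> W) : (forall i, span_of y (x i)) -> (m < n)%N -> ~ lin_indep x.
Proof.
move=> hx hmn hi.
have [A hA] := fin_all_exists hx.
pose X := \matrix_(i < n, j < m) A i j.
have nf : ~~ row_free X.
  rewrite /row_free; apply/negP => /eqP h.
  by have := rank_leq_col X; rewrite h leqNgt hmn.
have : kermx X != 0 by rewrite kermx_eq0.
apply/negP; rewrite negbK; apply/eqP/row_matrixP => i; rewrite row0.
apply/rowP => l; rewrite [RHS]mxE.
apply: (hi (fun l => row i (kermx X) 0 l) _ l).
under eq_bigr => j _ do rewrite hA.
have -> : \sum_(i0 < n) row i (kermx X) 0 i0 *: (\sum_(i1 < m) A i0 i1 *: y i1)
   = \sum_(i0 < n) row i (kermx X) 0 i0 *: (\sum_(i1 < m) X i0 i1 *: y i1).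
  by apply: eq_bigr => j _; congr (_ *: _); apply: eq_bigr => k _; rewrite mxE.
rewrite (sum_coord X y (row i (kermx X))) -row_mul mulmx_ker row0.
by apply: big1 => j _; rewrite mxE scale0r.
Qed.

Definition ext (F : fieldType) (W : lmodType F) k (e : 'I_k -> W) (w : W)
  : 'I_k.+1 -> W := fun i => if insub (val i) is Some j then e j else w.

Lemma ext_widen (F : fieldType) (W : lmodType F) k (e : 'I_k -> W) w j :
  ext e w (widen_ord (leqnSn k) j) = e j.
Proof. by rewrite /ext /= valK. Qed.

Lemma ext_max (F : fieldType) (W : lmodType F) k (e : 'I_k -> W) w :
  ext e w ord_max = w.
Proof. by rewrite /ext /= insubF // ltnn. Qed.

Lemma ord_casesS k (i : 'I_k.+1) :
  (exists j, i = widen_ord (leqnSn k) j) \/ i = ord_max.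
Proof.
case: (ltnP i k) => h; [left; exists (Ordinal h) | right]; apply: val_inj => //=.
by apply/eqP; rewrite eqn_leq h -ltnS ltn_ord.
Qed.

Lemma sum_ext (F : fieldType) (W : lmodType F) k (e : 'I_k -> W) w
  (c : 'I_k.+1 -> F) :
  \sum_(i < k.+1) c i *: ext e w i =
  \sum_(j < k) c (widen_ord (leqnSn k) j) *: e j + c ord_max *: w.
Proof.
rewrite big_ord_recr /= ext_max; congr (_ + _); apply: eq_bigr => j _.
by rewrite ext_widen.
Qed.

Lemma ext_indep (F : fieldType) (W : lmodType F) k (e : 'I_k -> W) w :
  lin_indep e -> ~ span_of e w -> lin_indep (ext e w).
Proof.
move=> he hw c; rewrite sum_ext => hc.
have cm0 : c ord_max = 0.
  apply/eqP; apply/negP => /negP nz; apply: hw.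
  exists (fun j => - (c ord_max)^-1 * c (widen_ord (leqnSn k) j)).
  have : c ord_max *: w = - \sum_(j < k) c (widen_ord (leqnSn k) j) *: e j.
    by apply/eqP; rewrite -addr_eq0 addrC hc.
  move/(congr1 (fun z => (c ord_max)^-1 *: z)).
  rewrite scalerA mulVf // scale1r => ->.
  rewrite scalerN scaler_sumr -sumrN; apply: eq_bigr => j _.
  by rewrite scalerA mulNr scaleNr.
move: hc; rewrite cm0 scale0r addr0 => /he hc0 i.
by case: (ord_casesS i) => [[j ->]|->].
Qed.

Lemma span_self (F : fieldType) (W : lmodType F) k (y : 'I_k -> W) i :
  span_of y (y i).
Proof.
exists (fun l => (l == i)%:R); rewrite (bigD1 i) //= eqxx scale1r big1 ?addr0 //.
by move=> j /negbTE ->; rewrite scale0r.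
Qed.

Lemma ext_P (F : fieldType) (W : lmodType F) k (e : 'I_k -> W) w
  (P : W -> Prop) : (forall j, P (e j)) -> P w -> forall i, P (ext e w i).
Proof.
by move=> he hw i; case: (ord_casesS i) => [[j ->]|->]; rewrite ?ext_widen ?ext_max.
Qed.

Lemma coord (F : fieldType) (W : lmodType F) (I : finType) (g : I -> W) :
  exists k (e : 'I_k -> W) (G : I -> 'I_k -> F),
    lin_indep e /\ forall i, g i = \sum_(j < k) G i j *: e j.
Proof.
pose g' : 'I_#|I| -> W := fun j => g (enum_val j).
pose Q k := exists e : 'I_k -> W, (forall j, span_of g' (e j)) /\ lin_indep e.
have Q0 : Q 0%N by exists (fun _ => 0); split; [case | move=> c _ []].
have Qb k : Q k -> (k <= #|I|)%N.
  case=> e [he hi]; rewrite leqNgt; apply/negP => lt.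
  exact: (steinitz he lt hi).
have [k [[e [hs hi]] nQ]] : exists k, Q k /\ ~ Q k.+1.
  apply: NNPP => hn.
  have hQ k : Q k by elim: k => // k IH; apply: NNPP => nq; apply: hn; exists k.
  by have := Qb _ (hQ #|I|.+1); rewrite ltnn.
have hsp i : span_of e (g i).
  apply: NNPP => nsp; apply: nQ; exists (ext e (g i)); split.
    apply: ext_P => //; rewrite -[i]enum_rankK; exact: span_self.
  exact: ext_indep.
have [G hG] := fin_all_exists hsp.
by exists k, e, G.
Qed.

Lemma nonroot (F : numFieldType) (p : {poly F}) :
  p != 0 -> exists x : F, x != 0 /\ ~~ root p x.
Proof.
move=> p0; apply: NNPP => hn.
pose rs := [seq (i.+1)%:R : F | i <- iota 0 (size p)].
have hr : all (root p) rs.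
  apply/allP => x /mapP [i _ ->]; apply: NNPP => nr; apply: hn.
  by exists (i.+1)%:R; split; [rewrite pnatr_eq0 | apply/negP].
have hu : uniq rs.
  rewrite map_inj_uniq ?iota_uniq // => i j /eqP.
  by rewrite eqr_nat eqSS => /eqP.
by have := max_poly_roots p0 hr hu; rewrite size_map size_iota ltnn.
Qed.

Lemma nonroot_unit (F : fieldType) n (A : 'M[F]_n) a :
  ~~ root (char_poly A) a -> (a%:M - A) \in unitmx.
Proof.
rewrite -eigenvalue_root_char; apply: contraR => nu; apply/eigenvalueP.
have : \det (a%:M - A) == 0 by rewrite unitmxE unitfE negbK in nu.
case/det0P => v nz hv; exists v => //.
rewrite mulmxBr mul_mx_scalar in hv.
by apply/eqP; rewrite eq_sym -subr_eq0 hv.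
Qed.

Lemma perturb (F : numFieldType) (W : lmodType F) n (a b : 'I_n -> W) :
  lin_indep a -> exists t : F, t != 0 /\ lin_indep (fun i => a i + t *: b i).
Proof.
move=> hai.
have [k [e [G [he hG]]]] :=
  coord (fun x : 'I_n + 'I_n => match x with inl i => a i | inr i => b i end).
pose Ca := \matrix_(i < n, j < k) G (inl i) j.
pose Cb := \matrix_(i < n, j < k) G (inr i) j.
have ha i : a i = \sum_(j < k) Ca i j *: e j.
  by rewrite (hG (inl i)); apply: eq_bigr => j _; rewrite mxE.
have hb i : b i = \sum_(j < k) Cb i j *: e j.
  by rewrite (hG (inr i)); apply: eq_bigr => j _; rewrite mxE.
have rfa : row_free Ca by apply/(indep_rowfree he ha).
case/row_freeP: rfa => B hB.
pose N := Cb *m B.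
have [x [x0 nr]] := nonroot (monic_neq0 (char_poly_monic (- N))).
exists x^-1; split; first by rewrite invr_eq0.
apply/(@indep_rowfree _ _ _ _ (Ca + x^-1 *: Cb) e _ he).
  move=> i; rewrite ha hb scaler_sumr -big_split; apply: eq_bigr => j _ /=.
  by rewrite !mxE scalerDl scalerA.
have U : (Ca + x^-1 *: Cb) *m B \in unitmx.
  rewrite mulmxDl hB -scalemxAl -/N.
  have -> : 1%:M + x^-1 *: N = x^-1 *: (x%:M - (- N)).
    by rewrite opprK scalerDr scale_scalar_mx mulVf.
  by rewrite unitmxZ ?unitfE ?invr_eq0 // nonroot_unit.
rewrite /row_free eqn_leq rank_leq_row /=.
by rewrite -{1}(mxrank_unit U) mxrankM_maxl.
Qed.

Lemma indep_eq (F : fieldType) (W : lmodType F) k (f g : 'I_k -> W) :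
  (forall i, f i = g i) -> lin_indep f -> lin_indep g.
Proof.
move=> e hf c hc; apply: hf; rewrite -[RHS]hc; apply: eq_bigr => i _; by rewrite e.
Qed.

Lemma ext_add (F : fieldType) (W : lmodType F) k (e e' : 'I_k -> W) w w' t i :
  ext e w i + t *: ext e' w' i = ext (fun j => e j + t *: e' j) (w + t *: w') i.
Proof. by case: (ord_casesS i) => [[j ->]|->]; rewrite ?ext_widen ?ext_max. Qed.

Lemma scale_last (F : fieldType) (W : lmodType F) k (e : 'I_k -> W) w t :
  t != 0 -> lin_indep (ext e w) -> lin_indep (ext e (t *: w)).
Proof.
move=> t0 hi c; rewrite sum_ext scalerA => hc.
have := hi (fun i => if i == ord_max then c i * t else c i).
rewrite sum_ext /= eqxx.
have hw j : (widen_ord (leqnSn k) j == ord_max) = false.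
  by apply/negbTE; rewrite -val_eqE /= neq_ltn ltn_ord.
under eq_bigr => j _ do rewrite hw.
move=> /(_ hc) h i; have := h i.
by case: eqP => // _ /eqP; rewrite mulf_eq0 (negbTE t0) orbF => /eqP.
Qed.

Definition comb (C : fieldType) (V W : lmodType C) s
  (M : 'I_s -> {linear V -> W}) (lam : 'I_s -> C) (v : V) : W :=
  \sum_(i < s) lam i *: M i v.

Lemma combDZ (C : fieldType) (V W : lmodType C) s
  (M : 'I_s -> {linear V -> W}) lam v t x :
  comb M lam (v + t *: x) = comb M lam v + t *: comb M lam x.
Proof.
rewrite /comb scaler_sumr -big_split; apply: eq_bigr => i _ /=.
by rewrite linearD linearZ /= scalerDr !scalerA mulrC.
Qed.

Unset Implicit Arguments.

Theorem lemma3p5 (C : numClosedFieldType) (V W : lmodType C) (s : nat)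
  (M : 'I_s -> {linear V -> W}) :
  tuple_rank_ge M s ->
  exists v : V, dim_eq (span_of (fun i : 'I_s => M i v)) s.
Proof.
move=> hrk.
pose Pv k := exists v, dim_ge (span_of (fun i : 'I_s => M i v)) k.
have spc lam v : span_of (fun i : 'I_s => M i v) (comb M lam v) by exists lam.
have core r : (r < s)%N -> Pv r -> ~ Pv r.+1 -> False.
  move=> rs [v0 [u [hus hui]]] nP.
  have H v : ~ dim_ge (span_of (fun i : 'I_s => M i v)) r.+1
    by move=> hd; apply: nP; exists v.
  have maxl w : span_of (fun i : 'I_s => M i v0) w -> span_of u w.
    move=> hw; apply: NNPP => nw; apply: (H v0); exists (ext u w); split.
      exact: ext_P.
    exact: ext_indep.
  have [cc hcc] := fin_all_exists hus.
  have nind : ~ lin_indep (fun i : 'I_s => M i v0).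
    by apply: (steinitz (y := u)) => // i; apply: maxl; apply: span_self.
  have [lam [hl0 [i0 hi0]]] : exists lam, comb M lam v0 = 0 /\ exists i, lam i != 0.
    apply: NNPP => hn; apply: nind => c hc i; apply: NNPP => ci; apply: hn.
    by exists c; split => //; exists i; apply/eqP.
  have key x : span_of u (comb M lam x).
    apply: NNPP => nsp.
    have ha := ext_indep hui nsp.
    have [t [t0 hab]] := perturb (ext (fun j => comb M (cc j) x) 0) ha.
    apply: (H (v0 + t *: x)).
    exists (ext (fun j => comb M (cc j) (v0 + t *: x)) (comb M lam (v0 + t *: x))).
    split; first by apply: ext_P.
    have h1 := indep_eq (fun i => ext_add _ _ _ _ t i) hab.
    have h2 : lin_indep (ext (fun j => u j + t *: comb M (cc j) x) (comb M lam x)).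
      by apply: (indep_eq _ h1) => i; rewrite scaler0 addr0.
    have h3 := scale_last t0 h2.
    apply: (indep_eq _ h3) => i; case: (ord_casesS i) => [[j ->]|->];
      rewrite ?ext_widen ?ext_max combDZ ?hl0 ?add0r //.
    by rewrite (hcc j).
  have [z [hz hzi]] := hrk lam (ex_intro _ i0 hi0).
  apply: (steinitz (y := u) _ rs hzi) => i.
  by have [x ->] := hz i; apply: key.
have hP k : (k <= s)%N -> Pv k.
  elim: k => [|k IH] ks.
    by exists 0, (fun _ => 0); split; [case | move=> c _ []].
  have := IH (ltnW ks) => hk; apply: NNPP => nk; exact: (core k ks hk nk).
have [v hv] := hP s (leqnn s).
exists v; split => // [[u [hu hui]]].
exact: (steinitz (y := fun i : 'I_s => M i v) hu (ltnSn s) hui).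
Qed.
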